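(* Let $a<b$ be real numbers and let $h:[a,b)\to\mathbb{R}$ be an increasing function such that $$C:=\overline{\lim_{x\to a}}\operatorname{ess}\frac{h(x)-h(a)}{(x-a)\,h'(x)}<\infty.$$ Then for every $q\in(0,1)$, $$\varlimsup_{x\to a}\frac{h(a+q(x-a))-h(a)}{h(x)-h(a)}\ \leq\ q^{1/C}.$$
   Context: An increasing function is differentiable almost everywhere, so $h'(x)$ is defined for almost all $x$. For a function $f:[a,b)\to\mathbb{R}$ (defined almost everywhere), the essential upper limit $\overline{\lim_{x\to a}}\operatorname{ess} f(x)$ is the greatest lower bound of the numbers $t\in\mathbb{R}$ such that $f(x)\le t$ for almost all $x$ in some interval $[a,\delta]\subset[a,b)$. Limits at $a$ are right-hand limits. *)

(* Defs.v *)
From HB Require Import structures.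
From mathcomp Require Import all_boot all_order all_algebra.
From mathcomp Require Import all_classical all_reals all_analysis.
Set Implicit Arguments. Unset Strict Implicit. Unset Printing Implicit Defensive.
Import Order.TTheory GRing.Theory Num.Theory.
Import numFieldNormedType.Exports.
Local Open Scope classical_set_scope.
Local Open Scope ring_scope.

(* The quotient (h x - h a) / ((x - a) h'(x)) as an extended real, with the
   conventions c/0 = +oo for c > 0 and 0/0 = 0 (only relevant where
   h'(x) = 0; numerator is >= 0 for increasing h and x >= a). *)
Definition dratio (R : realType) (h : R -> R) (a x : R) : \bar R :=
  let num := h x - h a in
  let den := (x - a) * derive1 h x in
  if den == 0 then (if num == 0 then 0%E else +oo%E) else (num / den)%:E.

(* Essential upper limit at a (from the right) of
   x |-> (h x - h a) / ((x - a) h'(x)), this function being defined at the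
   points x where h is differentiable:  the infimum of the real numbers t
   such that, for some delta with [a, delta] included in [a, b),
   for almost every x in [a, delta], h is differentiable at x and
   dratio h a x <= t.  (inf of the empty set is +oo.) *)
Definition ess_limsup_dratio (R : realType) (h : R -> R) (a b : R) : \bar R :=
  ereal_inf [set t%:E | t in [set t : R | exists2 d : R, a < d < b &
     {ae (@lebesgue_measure R), forall x, x \in `[a, d] ->
        derivable h x 1 /\ (dratio h a x <= t%:E)%E}]].

Definition limsup_right (R : realType) (g : R -> R) (a : R) : \bar R :=
  limf_esup (fun x => (g x)%:E) (a^'+).

(* q ^ (1 / C) for C in [0, +oo], 0 < q < 1, with q^(1/0) = q^(+oo) = 0
   and q^(1/+oo) = q^0 = 1. *)
Definition qpow_inv (R : realType) (q : R) (C : \bar R) : \bar R :=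
  match C with
  | r%:E => if r <= 0 then 0%E else (q `^ r^-1)%:E
  | +oo%E => 1%E
  | -oo%E => 0%E
  end.

(* Main.v *)
Require Import Defs.
From HB Require Import structures.
From mathcomp Require Import all_boot all_order all_algebra.
From mathcomp Require Import all_classical all_reals all_analysis.
Import Order.TTheory GRing.Theory Num.Theory.
Import numFieldNormedType.Exports.
Local Open Scope classical_set_scope.
Local Open Scope ring_scope.
From mathcomp Require Import ring lra measurable_realfun.
Section S.
Variable R : realType.
Local Notation mu := (@lebesgue_measure R).
Lemma deriv_right (f : R -> R) (x l e : R) : is_derive x 1 f l -> 0 < e ->
  exists2 r0, 0 < r0 & forall r, x < r < x + r0 ->
    (l - e) * (r - x) <= f r - f x <= (l + e) * (r - x).
Proof.
move=> [df dv] e0.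
have := (cvgrPdist_lt _ _).1 df e e0.
rewrite -/(derive f x 1).
rewrite dv.
move=> /(_ _) /nbhs_ballP[r0 /= r00 Hb].
exists r0 => // r /andP[xr rx].
have hne : r - x != 0 by rewrite subr_eq0 gt_eqF.
have hb : ball 0 r0 (r - x).
  rewrite /ball /= sub0r normrN ger0_norm ?subr_ge0 ?ltW //.
  by rewrite ltrBlDl.
have := Hb _ hb hne.
rewrite /= scaler1 subrK.
move=> H.
have rx0 : 0 < r - x by rewrite subr_gt0.
have H1 : l - (r - x)^-1 * (f r - f x) < e := le_lt_trans (ler_norm _) H.
have H2 : (r - x)^-1 * (f r - f x) - l < e.
  by apply: le_lt_trans H; rewrite distrC ler_norm.
apply/andP; split.
  move: H1; rewrite ltrBlDr -ltrBlDl => H3.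
  rewrite -ler_pdivlMr // mulrC.
  exact: ltW.
move: H2; rewrite ltrBlDr => H3.
rewrite -ler_pdivrMr // mulrC.
by rewrite [l + e]addrC; apply: ltW.
Qed.

Lemma F_derive (h : R -> R) (a t y : R) : derivable h y 1 -> 0 < h y - h a -> a < y ->
  is_derive y 1 (fun z => ln (h z - h a) - t^-1 * ln (z - a))
    ((h y - h a)^-1 * derive1 h y - t^-1 * (y - a)^-1).
Proof.
move=> dh Hy ay.
have dH : is_derive y 1 (fun z => h z - h a) (derive1 h y).
  have := is_deriveB (derivableP dh) (is_derive_cst (h a) y 1).
  by rewrite subr0 derive1E.
have dl1 := @is_derive1_comp R (@ln R) (fun z => h z - h a) y _ _ (is_derive1_ln Hy) dH.
have dZ : is_derive y 1 (fun z => z - a) 1.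
  have := is_deriveB (@is_derive_id _ _ y 1) (is_derive_cst a y 1).
  by rewrite subr0.
have dl2 := @is_derive1_comp R (@ln R) (fun z => z - a) y _ _ (is_derive1_ln (ltac:(by rewrite subr_gt0) : 0 < y - a)) dZ.
have := is_deriveB dl1 (is_deriveZ (t^-1) dl2).
by rewrite mulr1.
Qed.
Lemma real_ind (u v K : R) (P : R -> R) : u <= v -> 0 <= K ->
  (forall y1 y2, u <= y1 -> y1 <= y2 -> y2 <= v -> P y1 - K * (y2 - y1) <= P y2) ->
  (forall y, u <= y -> y < v -> exists2 r0, 0 < r0 & forall r, y < r < y + r0 -> P y <= P r) ->
  P u <= P v.
Proof.
move=> uv K0 P1 P2.
pose A := [set s | u <= s <= v /\ forall r, u <= r <= s -> P u <= P r].
have Au : A u.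
  split; first by rewrite lexx uv.
  by move=> r /andP[ur ru]; rewrite (@le_anti _ _ r u) ?ur ?ru.
have supA : has_sup A.
  split; first by exists u.
  by exists v => s [/andP[_ ->]].
set m := sup A.
have um : u <= m by apply: sup_upper_bound.
have mv : m <= v by apply: ge_sup; [exists u | move=> s [/andP[_ ->]]].
have Hlt : forall r, u <= r -> r < m -> P u <= P r.
  move=> r ur rm.
  have [s [_ Hs] ms] := @sup_adherent _ A (m - r) (ltac:(by rewrite subr_gt0)) supA.
  apply: Hs; rewrite ur /=; apply: ltW.
  by move: ms; rewrite opprB addrCA subrr addr0.
have Hm : P u <= P m.
  have [um'|] := eqVneq u m; first by rewrite um'.
  move=> /eqP => unm.
  have ltum : u < m by rewrite lt_neqAle um andbT; apply/eqP.
  apply/ler_addgt0Pr => eta eta0.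
  have K1 : 0 < K + 1 by rewrite ltr_wpDl.
  pose r := Num.max u (m - eta / (K + 1)).
  have ur : u <= r by rewrite le_max lexx.
  have rm : r < m by rewrite gt_max ltum /= ltrBlDr ltrDl divr_gt0.
  have mr : m - r <= eta / (K + 1).
    by rewrite lerBlDr -lerBlDl le_max lexx orbT.
  apply: (le_trans (Hlt r ur rm)).
  have := P1 r m ur (ltW rm) mv.
  rewrite lerBlDr => H; apply: (le_trans H); rewrite lerD2l.
  apply: (le_trans (ler_wpM2l K0 mr)).
  by rewrite mulrA ler_pdivrMr // mulrDr mulr1 [K * eta]mulrC lerDl ltW.
have mA : A m.
  split; first by rewrite um mv.
  move=> r /andP[ur rm]; have [->//|] := eqVneq r m.
  by move=> rnm; apply: Hlt => //; rewrite lt_neqAle rnm rm.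
have mv' : m = v.
  apply/eqP; rewrite eq_le mv /=; rewrite leNgt; apply/negP => mv2.
  have [r0 r00 Hr] := P2 m um mv2.
  pose s := Num.min (m + r0 / 2) v.
  have ms : m < s by rewrite lt_min mv2 ltrDl divr_gt0.
  have As : A s.
    split; first by rewrite (le_trans um (ltW ms)) ge_min lexx orbT.
    move=> r /andP[ur rs].
    have [rm|mr] := leP r m; first by apply mA.2; rewrite ur rm.
    apply: (le_trans Hm); apply: Hr; rewrite mr /=.
    apply: (le_lt_trans rs); rewrite gt_min; apply/orP; left.
    by rewrite ltrD2l ltr_pdivrMr // ltr_pMr // ltr1n.
  have := sup_upper_bound supA As; rewrite -/m leNgt ms //.
by rewrite -mv'; apply: mA.2; rewrite um lexx.
Qed.

Lemma mono_null (u v K : R) (F : R -> R) (N : set R) :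
  u <= v -> 0 <= K -> measurable N -> mu N = 0%E ->
  (forall y1 y2, u <= y1 -> y1 <= y2 -> y2 <= v -> F y1 - K * (y2 - y1) <= F y2) ->
  (forall y, u <= y -> y < v -> ~ N y -> forall e, 0 < e ->
     exists2 r0, 0 < r0 & forall r, y < r < y + r0 -> F y - e * (r - y) <= F r) ->
  F u <= F v.
Proof.
move=> uv K0 mN N0 H1 H2.
apply/ler_addgt0Pr => eps eps0.
pose K1 := K + 1.
have K10 : 0 < K1 by rewrite /K1; lra.
pose dl := eps / (2 * K1).
have dl0 : 0 < dl by rewrite divr_gt0 // mulr_gt0.
have : (lebesgue_measure N < +oo)%E.
by move: N0 => /= ->.
move=> Nfin.
have [U [oU NU UmN]] := @lebesgue_regularity_outer R N dl mN Nfin dl0.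
have mU : measurable U := open_measurable oU.
have muU : (mu U <= dl%:E)%E.
  apply: (le_trans (@le_measure _ _ _ mu U ((U `\` N) `|` N) _ _ _)).
  - by rewrite inE.
  - by rewrite inE; apply: measurableU => //; apply: measurableD.
  - by move=> x Ux; have [Nx|nNx] := pselect (N x); [right|left].
  apply: (le_trans (measureU2 _ _ _)) => //; first exact: measurableD.
  by move: N0 => /= ->; rewrite adde0 ltW.
pose lam s := fine (mu (U `&` `[u, s])).
have mI s : measurable (U `&` `[u, s]) by apply: measurableI.
have lamE s : (lam s)%:E = mu (U `&` `[u, s]).
  rewrite /lam fineK // ge0_fin_numE //.
  apply: (le_lt_trans _ (le_lt_trans muU (ltry _))).
  by apply: le_measure; rewrite ?inE //; do ?[exact: mI | by move=> x []].
have lam_le s : lam s <= dl.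
  rewrite -lee_fin lamE; apply: le_trans muU.
  by apply: le_measure; rewrite ?inE //; do ?[exact: mI | by move=> x []].
have lam0 s : 0 <= lam s by rewrite -lee_fin lamE.
have lam_mono s1 s2 : s1 <= s2 -> lam s1 <= lam s2.
  move=> s12; rewrite -lee_fin !lamE; apply: le_measure; rewrite ?inE //; try exact: mI.
  move=> x [Ux] /=.
  rewrite !in_itv /= => /andP[-> xs]; split => //.
  exact: le_trans s12.
have lam_open y : u <= y -> U y ->
    exists2 r0, 0 < r0 & forall r, y < r < y + r0 -> lam y + (r - y) <= lam r.
  move=> uy Uy.
  have : nbhs y U by apply: open_nbhs_nbhs; split.
  move=> /nbhs_ballP[r0 /= r00 Hb].
  exists r0 => // r /andP[yr ry].
  rewrite -lee_fin EFinD lamE.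
  have -> : ((r - y)%:E = mu `]y, r])%E.
    by rewrite lebesgue_measure_itv /= lte_fin yr /= EFinB.
  have disj : U `&` `[u, y] `&` `]y, r] = set0.
    rewrite -subset0 => x [[_ /=]]; rewrite !in_itv /= => /andP[_ xy] /andP[yx _].
    by move: (lt_le_trans yx xy); rewrite ltxx.
  rewrite -(measureU mu (mI y) _ disj) //.
  rewrite lamE; apply: le_measure; rewrite ?inE //; try exact: mI.
    by apply: measurableU => //; exact: mI.
  move=> x [[Ux]|] /=; rewrite !in_itv /=.
    move=> /andP[-> xy]; split => //; by rewrite (le_trans xy (ltW yr)).
  move=> /andP[yx xr]; split.
    apply: Hb; rewrite /ball /= distrC ger0_norm ?subr_ge0 ?ltW //.
    by rewrite ltrBlDl (le_lt_trans xr).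
  by rewrite xr (le_trans uy (ltW yx)).
pose eps2 := eps / (2 * (v - u + 1)).
have eps20 : 0 < eps2 by rewrite divr_gt0 // mulr_gt0 //; lra.
pose P s := F s + K1 * lam s + eps2 * s.
have : P u <= P v.
  apply: (@real_ind u v K P uv K0).
  - move=> y1 y2 uy1 y12 y2v.
    have h1 := H1 _ _ uy1 y12 y2v.
    have h2 : K1 * lam y1 <= K1 * lam y2 by rewrite ler_pM2l // lam_mono.
    have h3 : eps2 * y1 <= eps2 * y2 by rewrite ler_pM2l.
    have h4 : 0 <= eps2 * (y2 - y1) by apply: mulr_ge0; [apply: ltW | rewrite subr_ge0].
    rewrite /P; lra.
  - move=> y uy yv.
    have [Uy|nUy] := pselect (U y).
      have [r0 r00 Hr] := lam_open y uy Uy.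
      exists (Num.min r0 (v - y)); first by rewrite lt_min r00 subr_gt0.
      move=> r /andP[yr]; rewrite -ltrBlDl lt_min => /andP[ry rv].
      have rv' : r <= v by apply: ltW; move: rv; rewrite ltrD2r.
      have ry' : y < r < y + r0 by rewrite yr /= -ltrBlDl.
      have h1 := H1 _ _ uy (ltW yr) rv'.
      have h2 : K1 * (lam y + (r - y)) <= K1 * lam r by rewrite ler_pM2l // Hr.
      have h3 : eps2 * y <= eps2 * r by rewrite ler_pM2l // ltW.
      rewrite /P; rewrite mulrDr in h2; rewrite /K1 in h2 *; lra.
    have nNy : ~ N y by move=> /NU.
    have [r0 r00 Hr] := H2 y uy yv nNy eps2 eps20.
    exists r0 => // r rr.
    have h1 := Hr r rr.
    have yr : y <= r by case/andP: rr => /ltW.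
    have h2 : K1 * lam y <= K1 * lam r by rewrite ler_pM2l // lam_mono.
    have h3 : eps2 * r = eps2 * y + eps2 * (r - y) by rewrite mulrBr; lra.
    rewrite /P; lra.
rewrite /P.
have h1 : K1 * lam v <= eps / 2.
  apply: (le_trans (ler_wpM2l (ltW K10) (lam_le v))).
  have -> : K1 * dl = eps / 2 by rewrite /dl; field; rewrite gt_eqF.
  by [].
have h2 : eps2 * (v - u) <= eps / 2.
  have e : eps2 * (v - u + 1) = eps / 2.
    rewrite /eps2; field; rewrite gt_eqF //; lra.
  rewrite -e ler_pM2l //; lra.
have h3 : 0 <= K1 * lam u by apply: mulr_ge0 => //; apply: ltW.
have h4 : eps2 * v = eps2 * u + eps2 * (v - u) by rewrite mulrBr; lra.
lra.
Qed.
Lemma lnM2 (x y : R) : 0 < x -> 0 < y -> ln (x * y) = ln x + ln y.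
Proof. by move=> x0 y0; apply: lnM; rewrite posrE. Qed.

Lemma key (a d t q x : R) (h : R -> R) (N : set R) :
  0 < t -> 0 < q < 1 -> a < x -> x <= d ->
  {in `[a, d] &, {homo h : y z / y <= z}} ->
  measurable N -> (@lebesgue_measure R) N = 0%E ->
  (forall y, a < y -> y <= d -> ~ N y ->
     derivable h y 1 /\ h y - h a <= t * ((y - a) * derive1 h y)) ->
  h (a + q * (x - a)) - h a <= q `^ t^-1 * (h x - h a).
Proof.
move=> t0 /andP[q0 q1] ax xd hm mN N0 Hd.
pose u := a + q * (x - a).
have xa0 : 0 < x - a by rewrite subr_gt0.
have au : a < u by rewrite /u ltrDl mulr_gt0.
have ux : u < x.
  rewrite /u -ltrBrDl; rewrite -[X in _ < X]mul1r ltr_pM2r //.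
have inad y : a <= y -> y <= d -> y \in `[a, d] by move=> ay yd; rewrite in_itv /= ay yd.
have Hx0 : 0 <= h x - h a.
  by rewrite subr_ge0; apply: hm; rewrite ?inad ?lexx ?(ltW ad) ?(ltW ax) ?(le_trans (ltW ax) xd).
have [Hu0|Hu0] := leP (h u - h a) 0.
  apply: (le_trans Hu0); apply: mulr_ge0 => //; exact: powR_ge0.
have Hpos y : u <= y -> y <= x -> 0 < h y - h a.
  move=> uy yx; apply: (lt_le_trans Hu0); rewrite lerD2r; apply: hm => //.
    by apply: inad; [exact: ltW au | exact: le_trans (ltW ux) xd].
    by apply: inad; [exact: ltW (lt_le_trans au uy) | exact: le_trans yx xd].
pose F y := ln (h y - h a) - t^-1 * ln (y - a).
pose K := t^-1 / (u - a).
have ua0 : 0 < u - a by rewrite subr_gt0.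
have K0 : 0 <= K by rewrite /K; apply: divr_ge0; rewrite ltW // invr_gt0.
have : F u <= F x.
  apply: (@mono_null u x K F N (ltW ux) K0 mN N0).
  - move=> y1 y2 uy1 y12 y2x.
    have h1 : ln (h y1 - h a) <= ln (h y2 - h a).
      rewrite ler_ln ?posrE ?Hpos ?(le_trans uy1 y12) ?(le_trans y12 y2x) //.
      rewrite lerD2r; apply: hm => //; apply: inad.
      - exact: ltW (lt_le_trans au uy1).
      - exact: le_trans (le_trans y12 y2x) xd.
      - exact: ltW (lt_le_trans au (le_trans uy1 y12)).
      - exact: le_trans y2x xd.
    have y1a : 0 < y1 - a by rewrite subr_gt0 (lt_le_trans au uy1).
    have h2 : ln (y2 - a) - ln (y1 - a) <= (y2 - y1) / (u - a).
      have qq0 : 0 <= (y2 - y1) / (y1 - a).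
        by apply: divr_ge0; [rewrite subr_ge0 | apply: ltW].
      have p2 : 0 < 1 + (y2 - y1) / (y1 - a) by lra.
      have eln : ln (y2 - a) = ln (y1 - a) + ln (1 + (y2 - y1) / (y1 - a)).
        by rewrite -lnM2 //; congr ln; field; rewrite gt_eqF.
      rewrite eln addrAC subrr add0r.
      apply: (le_trans (le_ln1Dx _)); first by apply: (lt_le_trans (ltrN10 R)); apply: divr_ge0; [rewrite subr_ge0 | apply: ltW].
      apply: ler_wpM2l; first by rewrite subr_ge0.
      by rewrite lef_pV2 ?posrE // lerD2r.
    have h3 : t^-1 * (ln (y2 - a) - ln (y1 - a)) <= K * (y2 - y1).
      rewrite /K mulrAC -mulrA; apply: ler_wpM2l => //; first by rewrite ltW // invr_gt0.
    change (ln (h y1 - h a) - t^-1 * ln (y1 - a) - K * (y2 - y1) <= ln (h y2 - h a) - t^-1 * ln (y2 - a)).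
    rewrite mulrBr in h3; lra.
  - move=> y uy yx nNy e e0.
    have ay : a < y by exact: lt_le_trans au uy.
    have [dh Hy] := Hd y ay (le_trans (ltW yx) xd) nNy.
    have Hy0 := Hpos y uy (ltW yx).
    have dF := @F_derive h a t y dh Hy0 ay.
    set l := _ - _ in dF.
    have l0 : 0 <= l.
      have ya0 : 0 < y - a by rewrite subr_gt0.
      have -> : l = (t * ((y - a) * derive1 h y) - (h y - h a)) / ((h y - h a) * t * (y - a)).
        by rewrite /l; field; rewrite !gt_eqF.
      apply: divr_ge0; first by rewrite subr_ge0.
      by rewrite !mulr_ge0 // ltW.
    have [r0 r00 Hr] := @deriv_right _ _ _ e dF e0.
    exists r0 => // r rr.
    have /andP[H1 _] := Hr r rr.
    have ry : 0 <= r - y by case/andP: rr => yr _; rewrite subr_ge0 ltW.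
    have H2 : 0 <= l * (r - y) by rewrite mulr_ge0.
    rewrite mulrBl in H1.
    rewrite -/(F r) -/(F y) in H1; lra.
rewrite /F.
have -> : u - a = q * (x - a) by rewrite /u addrAC subrr add0r.
rewrite lnM2 // mulrDr => H.
have H' : ln (h u - h a) <= ln (h x - h a) + t^-1 * ln q by lra.
rewrite -(lnK (Hpos u (lexx u) (ltW ux))) -(lnK (Hpos x (ltW ux) (lexx x))) ?posrE //.
rewrite /powR gt_eqF // -expRD ler_expR; lra.
Qed.
Lemma dratio_le (h : R -> R) (a b y t s : R) : a < y -> y < b ->
  {in `[a, b[ &, {homo h : x z / x <= z}} -> derivable h y 1 ->
  (dratio h a y <= t%:E)%E -> t <= s -> h y - h a <= s * ((y - a) * derive1 h y).
Proof.
move=> ay yb hm dh hr ts.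
have ya0 : 0 < y - a by rewrite subr_gt0.
have hd0 : 0 <= derive1 h y.
  rewrite leNgt; apply/negP => hl.
  have dh' : is_derive y 1 h (derive1 h y) by rewrite derive1E; exact: derivableP.
  have e0 : 0 < - derive1 h y / 2 by rewrite divr_gt0 // oppr_gt0.
  have [r0 r00 Hr] := @deriv_right h y (derive1 h y) _ dh' e0.
  pose r := y + Num.min r0 (b - y) / 2.
  have m0 : 0 < Num.min r0 (b - y) by rewrite lt_min r00 subr_gt0.
  have m1 : Num.min r0 (b - y) <= r0 by rewrite ge_min lexx.
  have m2 : Num.min r0 (b - y) <= b - y by rewrite ge_min lexx orbT.
  have yr : y < r by rewrite /r ltrDl divr_gt0.
  have rr : r < y + r0 by rewrite /r; lra.
  have rb : r < b by rewrite /r; lra.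
  have /andP[_ H2] := Hr r (ltac:(by rewrite yr rr)).
  have : h y <= h r.
    by apply: hm; rewrite ?in_itv /= ?(ltW ay) ?yb ?rb ?(ltW yr) ?(ltW (lt_trans ay yr)).
  have : (derive1 h y + - derive1 h y / 2) * (r - y) < 0.
    have -> : derive1 h y + - derive1 h y / 2 = derive1 h y / 2 by field.
    by rewrite pmulr_llt0 ?subr_gt0 // pmulr_llt0.
  lra.
move: hr; rewrite /dratio.
have den0 : 0 <= (y - a) * derive1 h y by rewrite mulr_ge0 // ltW.
case: eqP => [den|/eqP den].
  case: eqP => [num _|_]; last by rewrite leye_eq.
  by rewrite num den mulr0.
rewrite lee_fin => hr.
have dp : 0 < (y - a) * derive1 h y by rewrite lt_neqAle eq_sym den den0.
move: hr; rewrite ler_pdivrMr // => hr.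
apply: (le_trans hr); rewrite ler_wpM2r //.
Qed.
Lemma limsup_le (a b s q : R) (h : R -> R) : a < b ->
  {in `[a, b[ &, {homo h : x y / x <= y}} -> 0 < s -> 0 < q < 1 ->
  (ess_limsup_dratio h a b < s%:E)%E ->
  (limsup_right (fun x : R => ((h (a + q * (x - a)) - h a) / (h x - h a))%R) a
     <= (q `^ s^-1)%:E)%E.
Proof.
move=> ab hm s0 hq /ereal_inf_lt [y [t [d /andP[ad db] Hae] <-]].
rewrite lte_fin => ts.
case: Hae => N [mN N0 HN].
have hmd : {in `[a, d] &, {homo h : x y / x <= y}}.
  move=> x z; rewrite !in_itv /= => /andP[ax xd] /andP[az zd] xz.
  by apply: hm; rewrite ?in_itv /= ?ax ?az ?(le_lt_trans xd db) ?(le_lt_trans zd db).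
have Hd z : a < z -> z <= d -> ~ N z ->
    derivable h z 1 /\ h z - h a <= s * ((z - a) * derive1 h z).
  move=> az zd nNz.
  have [Pz|nPz] := pselect (z \in `[a, d] -> derivable h z 1 /\ (dratio h a z <= t%:E)%E); last first.
    by exfalso; apply: nNz; apply: HN.
  have [dh dr] := Pz (ltac:(by rewrite in_itv /= (ltW az) zd)).
  split => //.
  exact: (@dratio_le h a b z t s az (le_lt_trans zd db) hm dh dr (ltW ts)).
rewrite /limsup_right /limf_esup.
apply: (le_trans (ereal_inf_lbound _)).
  exists [set x | a < x < d]; last by reflexivity.
  near=> x.
  apply/andP; split; first by near: x; exact: nbhs_right_gt.
  by near: x; exact: nbhs_right_lt.
apply: ge_ereal_sup => z [x /andP[ax xd] <-].
rewrite lee_fin.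
have Hx0 : 0 <= h x - h a.
  by rewrite subr_ge0; apply: hmd; rewrite ?in_itv /= ?lexx ?(ltW ad) ?(ltW ax) ?(ltW xd).
have [Hx|Hx] := eqVneq (h x - h a) 0.
  by rewrite Hx invr0 mulr0 powR_ge0.
have Hxp : 0 < h x - h a by rewrite lt_neqAle eq_sym Hx.
rewrite ler_pdivrMr //.
exact: (@key a d s q x h N s0 hq ax (ltW xd) hmd mN N0 Hd).
Unshelve. all: end_near.
Qed.

Lemma pow_val (q e : R) : 0 < q < 1 -> 0 < e < 1 ->
  0 < ln q / ln e /\ q `^ (ln q / ln e)^-1 = e.
Proof.
move=> /andP[q0 q1] /andP[e0 e1].
have lq : ln q < 0 by rewrite ln_lt0 // q0.
have le : ln e < 0 by rewrite ln_lt0 // e0.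
split.
  have : 0 < (- ln q) / (- ln e) by apply: divr_gt0; rewrite oppr_gt0.
  by rewrite invrN mulrNN.
rewrite /powR gt_eqF // invf_div.
have -> : ln e / ln q * ln q = ln e by field; rewrite lt_eqF.
by rewrite lnK // posrE.
Qed.

Lemma pow_lt1 (q s : R) : 0 < q < 1 -> 0 < s -> q `^ s^-1 < 1.
Proof.
move=> /andP[q0 q1] s0.
rewrite /powR gt_eqF // expR_lt1 pmulr_rlt0 ?invr_gt0 //.
by rewrite ln_lt0 // q0.
Qed.
Lemma le0_of (L : \bar R) (q : R) : 0 < q < 1 ->
  (forall s, 0 < s -> (L <= (q `^ s^-1)%:E)%E) -> (L <= 0)%E.
Proof.
move=> hq Hs; apply/lee_addgt0Pr => e e0; rewrite add0e.
pose e' := Num.min e (2^-1).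
have e'0 : 0 < e'.
  rewrite /e' lt_min e0 /=.
  lra.
have e'1 : e' < 1 by rewrite /e' gt_min; apply/orP; right; rewrite invf_lt1 // ltr1n.
have [s0 sv] := @pow_val q e' hq (ltac:(by rewrite e'0 e'1) : 0 < e' < 1).
apply: (le_trans (Hs _ s0)); rewrite sv lee_fin /e' ge_min lexx //.
Qed.
End S.

Theorem lemma1 (R : realType) (a b : R) (h : R -> R) :
  a < b ->
  {in `[a, b[ &, {homo h : x y / x <= y}} ->
  (ess_limsup_dratio h a b < +oo)%E ->
  forall q : R, 0 < q < 1 ->
    (limsup_right (fun x : R => ((h (a + q * (x - a)) - h a) / (h x - h a))%R) a
       <= qpow_inv q (ess_limsup_dratio h a b))%E.
Proof.
move=> ab hm HC q hq.
have Hs : forall s, 0 < s -> (ess_limsup_dratio h a b < s%:E)%E ->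
    (limsup_right (fun x : R => ((h (a + q * (x - a)) - h a) / (h x - h a))%R) a
       <= (q `^ s^-1)%:E)%E.
  by move=> s s0 Cs; exact: (@limsup_le R a b s q h ab hm s0 hq Cs).
move: HC Hs; rewrite /qpow_inv.
case: (ess_limsup_dratio h a b) => [r| |] HC Hs; last first.
- by apply: (@le0_of R _ q hq) => s s0; apply: Hs => //; rewrite ltNye.
- by rewrite ltxx in HC.
case: ifPn => r0.
  by apply: (@le0_of R _ q hq) => s s0; apply: Hs => //; rewrite lte_fin (le_lt_trans r0 s0).
rewrite -ltNge in r0.
case/andP: (hq) => q0 q1.
pose p := q `^ r^-1.
have p0 : 0 < p by rewrite powR_gt0.
apply/lee_addgt0Pr => e e0; rewrite -EFinD.
have [pe1|pe1] := ltP (p + e) 1.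
  have pe0 : 0 < p + e by rewrite addr_gt0.
  have [s0 sv] := @pow_val R q (p + e) hq (ltac:(by rewrite pe0 pe1) : 0 < p + e < 1).
  set L := ln (p + e) in s0 sv *.
  have L0 : L < 0 by rewrite ln_lt0 // pe0.
  have lp : r^-1 * ln q < L.
    by rewrite -ln_powR ltr_ln ?posrE // ?ltrDl.
  have rs : r < ln q / L.
    have lq : ln q < r * L.
      by move: lp; rewrite -(ltr_pM2l r0) mulrA divff ?gt_eqF // mul1r.
    have : 0 < (r * L - ln q) / (- L) by apply: divr_gt0; rewrite ?oppr_gt0 ?subr_gt0.
    have -> : ln q / L = r + (r * L - ln q) / (- L) by field; rewrite lt_eqF.
    lra.
  apply: (le_trans (Hs _ s0 _)); first by rewrite lte_fin.
  by rewrite sv.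
have s0 : 0 < r + 1 by rewrite addr_gt0.
apply: (le_trans (Hs _ s0 _)); first by rewrite lte_fin ltrDl.
rewrite lee_fin; apply: ltW; apply: (lt_le_trans _ pe1).
exact: pow_lt1.
Qed.
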